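(* Let $G$ be a graph and $k\in\mathbb N$. For every finite star $\sigma\subseteq\vec S_k(G)$ with finite interior, the set $S_k^\sigma(G)$ is finite.
   Context: Graphs may be infinite. A separation of $G$ is a set $\{A,B\}$ with $A,B\subseteq V(G)$, $A\cup B=V(G)$ and no edge of $G$ between $A\setminus B$ and $B\setminus A$; its order is $|A\cap B|$. $S_k(G)$ is the set of separations of order $<k$ and $\vec S_k(G)$ the set of their orientations $(A,B)$, $(B,A)$. Oriented separations are ordered by $(A,B)\le(C,D)$ iff $A\subseteq C$ and $B\supseteq D$. A star is a set $\sigma$ of oriented finite-order separations, not containing $(V(G),V(G))$, with $(A,B)\le(D,C)$ for any two distinct $(A,B),(C,D)\in\sigma$; its interior is $\bigcap_{(A,B)\in\sigma}B$. $S_k^\sigma(G)$ is the set of $r\in S_k(G)$ such that for every $\vec s\in\sigma$ some orientation of $r$ is $\ge\vec s$. *)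

(* Defs.v *)
(* Graphs may be infinite: a graph is a vertex type V with a
   symmetric, irreflexive adjacency relation. Vertex sets are predicates V -> Prop. *)
From Stdlib Require Import List.

Definition vset (V : Type) := V -> Prop.

Definition osep (V : Type) := (vset V * vset V)%type.

Definition is_separation {V : Type} (adj : V -> V -> Prop) (A B : vset V) : Prop :=
  (forall v, A v \/ B v) /\
  (forall u v, A u -> ~ B u -> B v -> ~ A v -> ~ adj u v).

(* |A ∩ B| < k : A ∩ B is covered by some list of length < k
   (i.e. A ∩ B is finite with fewer than k elements). *)
Definition order_lt {V : Type} (A B : vset V) (k : nat) : Prop :=
  exists s : list V, length s < k /\ forall v, A v -> B v -> In v s.

Definition vset_finite {V : Type} (X : vset V) : Prop :=
  exists s : list V, forall v, X v -> In v s.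

Definition finite_order {V : Type} (A B : vset V) : Prop :=
  vset_finite (fun v => A v /\ B v).

Definition in_vSk {V : Type} (adj : V -> V -> Prop) (k : nat) (p : osep V) : Prop :=
  is_separation adj (fst p) (snd p) /\ order_lt (fst p) (snd p) k.

Definition osep_le {V : Type} (p q : osep V) : Prop :=
  (forall v, fst p v -> fst q v) /\ (forall v, snd q v -> snd p v).

Definition full_osep (V : Type) : osep V := (fun _ => True, fun _ => True).

Definition is_star {V : Type} (adj : V -> V -> Prop) (sigma : list (osep V)) : Prop :=
  (forall p, In p sigma -> is_separation adj (fst p) (snd p) /\ finite_order (fst p) (snd p)) /\
  ~ In (full_osep V) sigma /\
  (forall p q, In p sigma -> In q sigma -> p <> q -> osep_le p (snd q, fst q)).

Definition interior {V : Type} (sigma : list (osep V)) : vset V :=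
  fun v => forall p, In p sigma -> snd p v.

(* {A,B} ∈ S_k^sigma(G), with the unordered separation represented by (A,B). *)
Definition in_Sk_sigma {V : Type} (adj : V -> V -> Prop) (k : nat)
    (sigma : list (osep V)) (A B : vset V) : Prop :=
  in_vSk adj k (A, B) /\
  forall s, In s sigma -> osep_le s (A, B) \/ osep_le s (B, A).

(* S_k^sigma(G) is finite: finitely many unordered separations {A,B}, i.e. a
   finite list L of oriented separations containing an orientation of each. *)
Definition Sk_sigma_finite {V : Type} (adj : V -> V -> Prop) (k : nat)
    (sigma : list (osep V)) : Prop :=
  exists L : list (osep V), forall A B, in_Sk_sigma adj k sigma A B ->
    In (A, B) L \/ In (B, A) L.

(* Main.v *)
Require Import Defs.
From Stdlib Require Import List Classical FunctionalExtensionality PropExtensionality.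

Fixpoint subs {X : Type} (l : list X) : list (list X) :=
  match l with
  | nil => nil :: nil
  | x :: l' => map (cons x) (subs l') ++ subs l'
  end.

Lemma subs_ex {X : Type} (P : X -> Prop) (l : list X) :
  exists T, In T (subs l) /\ (forall x, In x T -> In x l) /\
            (forall x, In x l -> (In x T <-> P x)).
Proof.
  induction l as [|x l IH]; simpl.
  - exists nil; repeat split; auto; intros; contradiction.
  - destruct IH as [T [HT [Hs Hi]]].
    destruct (classic (P x)) as [Px|nPx].
    + exists (x :: T); split; [apply in_or_app; left; apply in_map; auto|].
      split; [intros y [<-|Hy]; auto|].
      intros y [<-|Hy]; simpl; split; auto.
      * intros [<-|HT']; auto. apply Hi; auto.
      * intros Py. right. apply Hi; auto.
    + exists T; split; [apply in_or_app; right; auto|].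
      split; [intros y Hy; auto|].
      intros y [<-|Hy].
      * split; intro H; [|contradiction]. exfalso. apply nPx, Hi; auto.
      * apply Hi; auto.
Qed.

Definition mkA {V : Type} (I : vset V) (T : list (osep V)) (SA : list V) : vset V :=
  fun v => (I v /\ In v SA) \/ (~ I v /\ exists p, In p T /\ ~ snd p v).
Definition mkB {V : Type} (sigma : list (osep V)) (I : vset V) (T : list (osep V)) (SB : list V) : vset V :=
  fun v => (I v /\ In v SB) \/ (~ I v /\ exists p, In p sigma /\ ~ In p T /\ ~ snd p v).

Theorem proposition4p5 (V : Type) (adj : V -> V -> Prop)
  (adj_sym : forall u v, adj u v -> adj v u)
  (adj_irrefl : forall v, ~ adj v v)
  (k : nat) (sigma : list (osep V)) :
  is_star adj sigma ->
  (forall p, In p sigma -> in_vSk adj k p) ->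
  vset_finite (interior sigma) ->
  Sk_sigma_finite adj k sigma.
Proof.
  intros _ _ [l Hl].
  set (I := interior sigma).
  exists (flat_map (fun T => flat_map (fun SA => map (fun SB =>
            (mkA I T SA, mkB sigma I T SB)) (subs l)) (subs l)) (subs sigma)).
  intros A B [[[Hcov _] _] Hor].
  left.
  destruct (subs_ex (fun p => osep_le p (A, B)) sigma) as [T [HT [Ts Ti]]].
  destruct (subs_ex A l) as [SA [HSA [_ SAi]]].
  destruct (subs_ex B l) as [SB [HSB [_ SBi]]].
  assert (EA : A = mkA I T SA).
  { apply functional_extensionality; intro v; apply propositional_extensionality.
    unfold mkA; split.
    - intro Av. destruct (classic (I v)) as [Iv|nIv].
      + left; split; auto. apply SAi; auto.
      + right; split; auto.
        apply not_all_ex_not in nIv as [p Hp].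
        apply imply_to_and in Hp as [Hp Hnd].
        exists p; split; auto.
        apply Ti; auto.
        destruct (Hor p Hp) as [H|H]; auto.
        exfalso; apply Hnd, (proj2 H); exact Av.
    - intros [[Iv Hin]|[nIv [p [HpT Hnd]]]].
      + apply SAi; auto.
      + assert (Hle := proj1 (Ti p (Ts p HpT)) HpT).
        destruct (Hcov v) as [Av|Bv]; auto.
        exfalso; apply Hnd, (proj2 Hle); exact Bv. }
  assert (EB : B = mkB sigma I T SB).
  { apply functional_extensionality; intro v; apply propositional_extensionality.
    unfold mkB; split.
    - intro Bv. destruct (classic (I v)) as [Iv|nIv].
      + left; split; auto. apply SBi; auto.
      + right; split; auto.
        apply not_all_ex_not in nIv as [p Hp].
        apply imply_to_and in Hp as [Hp Hnd].
        exists p; split; auto. split; auto.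
        intro HpT. apply Hnd. apply (proj2 (proj1 (Ti p Hp) HpT)). exact Bv.
    - intros [[Iv Hin]|[nIv [p [Hp [HpT Hnd]]]]].
      + apply SBi; auto.
      + destruct (Hor p Hp) as [H|H].
        * exfalso; apply HpT, Ti; auto.
        * destruct (Hcov v) as [Av|Bv]; auto.
          exfalso; apply Hnd, (proj2 H); exact Av. }
  rewrite EA, EB.
  apply in_flat_map; exists T; split; auto.
  apply in_flat_map; exists SA; split; auto.
  apply in_map_iff; exists SB; split; auto.
Qed.
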